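(* Let $G$ be a $\sigma$-compact locally compact Abelian group and $\omega=\sum_{x\in\Gamma}\omega(x)\delta_x$ a translation bounded discrete measure on $G$. (i) If $\omega$ is norm-almost periodic, then $\omega$ is sup-almost periodic. (ii) If $\Gamma$ is weakly uniformly discrete, then $\omega$ is norm-almost periodic if and only if $\omega$ is sup-almost periodic.
   Context: Fix a compact $K\subset G$ with nonempty interior. For a translation bounded measure $\mu$, $\|\mu\|_K:=\sup_{t\in G}|\mu|(t+K)$, and $T_t\mu$ denotes the translate $T_t\mu(A)=\mu(A-t)$. $\omega$ is norm-almost periodic if for every $\varepsilon>0$ the set $P^K_\varepsilon(\omega):=\{t\in G:\|\omega-T_t\omega\|_K<\varepsilon\}$ is relatively dense. A discrete measure $\omega$ is sup-almost periodic if for every $\varepsilon>0$ the set $P^\infty_\varepsilon(\omega):=\{t\in G:\sup_{x\in G}|\omega(\{t+x\})-\omega(\{x\})|<\varepsilon\}$ is relatively dense. A set $\Gamma$ is weakly uniformly discrete if $\sup_{x\in G}\#(\Gamma\cap(x+K))<\infty$ for every compact $K$. Relatively dense: $A+K'=G$ for some compact $K'$. *)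

(* Defs.v *)
From Stdlib Require Import Reals List.
Import ListNotations.
Open Scope R_scope.

Definition Cx := (R * R)%type.
Definition C0 : Cx := (0, 0).
Definition Csub (a b : Cx) : Cx := (fst a - fst b, snd a - snd b).
Definition Cnorm (z : Cx) : R := sqrt (fst z * fst z + snd z * snd z).

Definition is_compact {T : Type} (op : (T -> Prop) -> Prop) (K : T -> Prop) : Prop :=
  forall (I : Type) (U : I -> T -> Prop),
    (forall i, op (U i)) ->
    (forall x, K x -> exists i, U i x) ->
    exists l : list I, forall x, K x -> exists i, In i l /\ U i x.

Record LCAGroup := {
  carrier :> Type;
  gadd : carrier -> carrier -> carrier;
  gopp : carrier -> carrier;
  gzero : carrier;
  gaddA : forall x y z, gadd x (gadd y z) = gadd (gadd x y) z;
  gaddC : forall x y, gadd x y = gadd y x;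
  gadd0 : forall x, gadd gzero x = x;
  gaddN : forall x, gadd (gopp x) x = gzero;
  gopen : (carrier -> Prop) -> Prop;
  gopen_full : gopen (fun _ => True);
  gopen_inter : forall U V, gopen U -> gopen V -> gopen (fun x => U x /\ V x);
  gopen_union : forall (I : Type) (U : I -> carrier -> Prop),
      (forall i, gopen (U i)) -> gopen (fun x => exists i, U i x);
  ghausdorff : forall x y, x <> y ->
      exists U V, gopen U /\ gopen V /\ U x /\ V y /\ (forall z, U z -> V z -> False);
  gadd_cont : forall U x y, gopen U -> U (gadd x y) ->
      exists V W, gopen V /\ gopen W /\ V x /\ W y /\
        (forall a b, V a -> W b -> U (gadd a b));
  gopp_cont : forall U, gopen U -> gopen (fun x => U (gopp x));
  glocally_compact : forall x, exists U Kx, gopen U /\ is_compact gopen Kx /\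
      U x /\ (forall y, U y -> Kx y)
}.

Arguments gadd {_}. Arguments gopp {_}. Arguments gzero {_}. Arguments gopen {_}.

Section Defs.
Variable G : LCAGroup.

Definition gcompact (K : G -> Prop) : Prop := is_compact gopen K.

Definition sigma_compact : Prop :=
  exists Kn : nat -> G -> Prop, (forall n, gcompact (Kn n)) /\ forall x, exists n, Kn n x.

Definition nonempty_interior (K : G -> Prop) : Prop :=
  exists U : G -> Prop, gopen U /\ (exists x, U x) /\ (forall x, U x -> K x).

Definition gsub (x y : G) : G := gadd x (gopp y).

Definition translate_set (t : G) (K : G -> Prop) : G -> Prop :=
  fun x => exists k, K k /\ x = gadd t k.

Definition relatively_dense (A : G -> Prop) : Prop :=
  exists K' : G -> Prop, gcompact K' /\
    forall g, exists a k, A a /\ K' k /\ g = gadd a k.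

Definition sum_list (l : list R) : R := fold_right Rplus 0 l.

(** For a discrete measure nu = sum_x nu(x) delta_x, |nu|(A) = sum_{x in A} |nu(x)|
    (a possibly infinite sum of nonnegative terms = sup of finite subsums).
    [tv_le nu A c] says |nu|(A) <= c. *)
Definition tv_le (nu : G -> Cx) (A : G -> Prop) (c : R) : Prop :=
  forall l : list G, NoDup l -> (forall x, In x l -> A x) ->
    sum_list (map (fun x => Cnorm (nu x)) l) <= c.

Definition normK_lt (K : G -> Prop) (nu : G -> Cx) (eps : R) : Prop :=
  exists c, c < eps /\ forall t, tv_le nu (translate_set t K) c.

Definition translation_bounded (K : G -> Prop) (w : G -> Cx) : Prop :=
  exists c, forall t, tv_le w (translate_set t K) c.

(** the point masses of omega - T_t omega, where T_t omega ({x}) = omega({x - t}) *)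
Definition diff_translate (w : G -> Cx) (t : G) : G -> Cx :=
  fun x => Csub (w x) (w (gsub x t)).

Definition P_K (K : G -> Prop) (w : G -> Cx) (eps : R) : G -> Prop :=
  fun t => normK_lt K (diff_translate w t) eps.

Definition norm_almost_periodic (K : G -> Prop) (w : G -> Cx) : Prop :=
  forall eps, 0 < eps -> relatively_dense (P_K K w eps).

Definition P_inf (w : G -> Cx) (eps : R) : G -> Prop :=
  fun t => exists c, c < eps /\ forall x, Cnorm (Csub (w (gadd t x)) (w x)) <= c.

Definition sup_almost_periodic (w : G -> Cx) : Prop :=
  forall eps, 0 < eps -> relatively_dense (P_inf w eps).

Definition weakly_uniformly_discrete (Gam : G -> Prop) : Prop :=
  forall K, gcompact K -> exists N : nat, forall x (l : list G), NoDup l ->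
    (forall y, In y l -> Gam y /\ translate_set x K y) -> (length l <= N)%nat.

End Defs.

(* Main.v *)
Require Import Defs.
From Stdlib Require Import Reals List.
From Stdlib Require Import Lra Classical.
Import ListNotations.
Open Scope R_scope.

Section Aux.
Variable G : LCAGroup.

Lemma g_sub_add_l (t x : G) : gsub G (gadd t x) t = x.
Proof.
  unfold gsub. rewrite (gaddC _ t x), <- gaddA, (gaddC _ t (gopp t)), gaddN.
  rewrite gaddC, gadd0. reflexivity.
Qed.

Lemma g_add_sub (t x : G) : gadd t (gsub G x t) = x.
Proof.
  unfold gsub. rewrite (gaddC _ x (gopp t)), gaddA, (gaddC _ t (gopp t)), gaddN, gadd0.
  reflexivity.
Qed.

Lemma g_sub_add_r (s k t : G) : gsub G (gadd s k) t = gadd (gsub G s t) k.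
Proof.
  unfold gsub. rewrite <- gaddA, (gaddC _ k (gopp t)), gaddA. reflexivity.
Qed.

Lemma g_sub_inj (a y z : G) : gsub G y a = gsub G z a -> y = z.
Proof.
  intro H. rewrite <- (g_add_sub a y), <- (g_add_sub a z), H. reflexivity.
Qed.

Lemma Cnorm_ge0 z : 0 <= Cnorm z.
Proof. unfold Cnorm. apply sqrt_pos. Qed.

Lemma count_bound (P Q A : G -> Prop) (f : G -> R) (c : R) :
  (forall x, f x <= c) -> (forall x, f x <> 0 -> P x \/ Q x) ->
  forall l, NoDup l -> (forall x, In x l -> A x) ->
  exists lp lq, NoDup lp /\ NoDup lq /\
    (forall x, In x lp -> P x /\ A x) /\ (forall x, In x lq -> Q x /\ A x) /\
    (forall x, In x lp -> In x l) /\ (forall x, In x lq -> In x l) /\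
    sum_list (map f l) <= c * INR (length lp + length lq).
Proof.
  intros Hc Hf l. induction l as [|x l IH]; intros Hnd HA.
  - exists [], []. simpl.
    split; [constructor|]. split; [constructor|].
    split; [intros _ []|]. split; [intros _ []|].
    split; [intros _ []|]. split; [intros _ []|]. rewrite Rmult_0_r. lra.
  - apply NoDup_cons_iff in Hnd as [Hx Hnd].
    destruct (IH Hnd (fun y Hy => HA y (or_intror Hy))) as
      (lp & lq & H1 & H2 & H3 & H4 & H5 & H6 & H7).
    simpl.
    destruct (classic (f x = 0)) as [E|E].
    + exists lp, lq.
      refine (conj H1 (conj H2 (conj H3 (conj H4 (conj _ (conj _ _)))))).
      * intros y Hy; right; auto.
      * intros y Hy; right; auto.
      * rewrite E. lra.
    + destruct (Hf x E) as [Px|Qx].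
      * exists (x :: lp), lq.
        refine (conj _ (conj H2 (conj _ (conj H4 (conj _ (conj _ _)))))).
        -- constructor; auto.
        -- intros y [<-|Hy]; [split; auto; apply HA; left; auto | apply H3; auto].
        -- intros y [<-|Hy]; [left; auto | right; auto].
        -- intros y Hy; right; auto.
        -- simpl length. rewrite Nat.add_succ_l, S_INR. specialize (Hc x). lra.
      * exists lp, (x :: lq).
        refine (conj H1 (conj _ (conj H3 (conj _ (conj _ (conj _ _)))))).
        -- constructor; auto.
        -- intros y [<-|Hy]; [split; auto; apply HA; left; auto | apply H4; auto].
        -- intros y Hy; right; auto.
        -- intros y [<-|Hy]; [left; auto | right; auto].
        -- simpl length. rewrite Nat.add_succ_r, S_INR. specialize (Hc x). lra.
Qed.

End Aux.

Lemma part1 (G : LCAGroup) (K : G -> Prop) (HKi : nonempty_interior G K)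
  (w : G -> Cx) : norm_almost_periodic G K w -> sup_almost_periodic G w.
Proof.
  intros H eps Heps. destruct (H eps Heps) as [K' [HK' Hd]].
  exists K'. split; auto. intros g. destruct (Hd g) as (a & k & Pa & Kk & E).
  exists a, k. split; auto.
  destruct Pa as [c [Hc Htv]]. exists c. split; auto. intros x.
  destruct HKi as (U & _ & [k0 Uk0] & HU).
  set (z := gadd a x).
  specialize (Htv (gsub G z k0) [z]).
  assert (Hz : gadd (gsub G z k0) k0 = z).
  { unfold gsub. rewrite <- gaddA, (gaddN _ k0), gaddC, gadd0. reflexivity. }
  assert (T : sum_list (map (fun x => Cnorm (diff_translate G w a x)) [z]) <= c).
  { apply Htv. constructor; [simpl; tauto | constructor].
    intros y [<-|[]]. exists k0. split; auto. }
  simpl in T. unfold diff_translate, z in T. rewrite g_sub_add_l in T. unfold z. lra.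
Qed.

Theorem lemma3p4 (G : LCAGroup) (HG : sigma_compact G)
  (K : G -> Prop) (HK : gcompact G K) (HKi : nonempty_interior G K)
  (Gam : G -> Prop) (w : G -> Cx) (Hsupp : forall x, w x <> C0 -> Gam x)
  (Htb : translation_bounded G K w) :
  (norm_almost_periodic G K w -> sup_almost_periodic G w) /\
  (weakly_uniformly_discrete G Gam ->
     (norm_almost_periodic G K w <-> sup_almost_periodic G w)).
Proof.
  split; [apply part1; auto|]. intros HW. split; [apply part1; auto|].
  intros H eps Heps.
  destruct (HW K HK) as [N HN].
  assert (HN0 : 0 <= INR N) by apply pos_INR.
  set (d := eps / (2 * INR N + 1)).
  assert (Hd : 0 < d) by (unfold d; apply Rdiv_lt_0_compat; lra).
  assert (Hde : d * (2 * INR N + 1) = eps) by (unfold d; field; lra).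
  destruct (H d Hd) as [K' [HK' Hden]].
  exists K'. split; auto. intros g. destruct (Hden g) as (a & k & Pa & Kk & E).
  exists a, k. split; auto.
  destruct Pa as [c [Hc Hsup]].
  assert (c0 : 0 <= c) by (eapply Rle_trans; [apply Cnorm_ge0 | apply (Hsup gzero)]).
  exists (c * (2 * INR N)). split; [nra|].
  intros s l Hnd Hl.
  destruct (count_bound G Gam (fun x => Gam (gsub G x a)) (translate_set G s K)
     (fun x => Cnorm (diff_translate G w a x)) c) with (l := l)
     as (lp & lq & H1 & H2 & H3 & H4 & _ & _ & H7); auto.
  - intros x. unfold diff_translate. specialize (Hsup (gsub G x a)).
    rewrite g_add_sub in Hsup. exact Hsup.
  - intros x Hx. destruct (classic (w x = C0)) as [E1|E1]; [|left; auto].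
    destruct (classic (w (gsub G x a) = C0)) as [E2|E2]; [|right; auto].
    exfalso. apply Hx. unfold diff_translate. rewrite E1, E2.
    unfold Cnorm, Csub, C0; simpl.
    replace ((0 - 0) * (0 - 0) + (0 - 0) * (0 - 0)) with 0 by ring. apply sqrt_0.
  - assert (Lp : (length lp <= N)%nat) by (apply (HN s lp); auto).
    assert (Lq : (length lq <= N)%nat).
    { rewrite <- (length_map (fun y => gsub G y a) lq).
      apply (HN (gsub G s a)).
      - apply NoDup_map_NoDup_ForallPairs; auto. intros y z _ _; apply g_sub_inj.
      - intros y Hy. apply in_map_iff in Hy as (x & <- & Hx).
        destruct (H4 x Hx) as [Q1 [k1 [Kk1 ->]]]. split; auto.
        exists k1. split; auto. apply g_sub_add_r. }
    eapply Rle_trans; [exact H7|]. apply Rmult_le_compat_l; auto.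
    rewrite plus_INR. apply le_INR in Lp, Lq. lra.
Qed.
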